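(* Let $\beta,\gamma\in\mathcal S_n$, where $\beta$ is a single $n$-cycle. Then $(\varepsilon,\beta,\gamma;(12))\in\mathrm{Par}(n)$ if and only if both of the following hold: <ul> <li>(i) the length of each cycle of $\gamma$ divides $2n$;</li> <li>(ii) at most one cycle of $\gamma$ has odd length.</li> </ul> Fixed points count as cycles of length $1$.
   Context: A Latin square of order $n$ is an $n\times n$ array with rows, columns and symbols indexed by $[n]$, each symbol occurring once in each row and each column, with triple set $O(L)$. Permutations act on the right; $\varepsilon$ is the identity. A paratopism $(\alpha,\beta,\gamma;(12))$ maps $L$ to $L^\sigma$ with triple set $\{(y\beta,x\alpha,z\gamma):(x,y,z)\in O(L)\}$; it is an autoparatopism of $L$ if $L^\sigma=L$. $\mathrm{Par}(n)$ is the set of paratopisms that are autoparatopisms of at least one Latin square of order $n$. *)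

(* Defs.v *)
From mathcomp Require Import all_boot all_order all_fingroup.
Set Implicit Arguments.
Unset Strict Implicit.
Unset Printing Implicit Defensive.

Definition latin_square (n : nat) (L : 'I_n -> 'I_n -> 'I_n) : Prop :=
  (forall x, injective (L x)) /\ (forall y, injective (fun x => L x y)).

Definition triples (n : nat) (L : 'I_n -> 'I_n -> 'I_n) : {set 'I_n * 'I_n * 'I_n} :=
  [set t | t.2 == L t.1.1 t.1.2].

(* Image of L under the paratopism (alpha, beta, gamma; (12)):
   triples {(y beta, x alpha, z gamma) : (x,y,z) in O(L)}.  Permutations act
   on the right, so "x alpha" is written (alpha x). *)
Definition paratopism12_image (n : nat) (alpha beta gamma : {perm 'I_n})
  (L : 'I_n -> 'I_n -> 'I_n) : {set 'I_n * 'I_n * 'I_n} :=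
  [set (beta t.1.2, alpha t.1.1, gamma t.2) | t in triples L].

Definition autoparatopism12 (n : nat) (alpha beta gamma : {perm 'I_n})
  (L : 'I_n -> 'I_n -> 'I_n) : Prop :=
  paratopism12_image alpha beta gamma L = triples L.

Definition in_Par12 (n : nat) (alpha beta gamma : {perm 'I_n}) : Prop :=
  exists L : 'I_n -> 'I_n -> 'I_n, latin_square L /\ autoparatopism12 alpha beta gamma L.

Definition is_full_cycle (n : nat) (beta : {perm 'I_n}) : Prop :=
  #|porbits beta| = 1.

(* Main.v *)
Require Import Defs.
From mathcomp Require Import all_boot all_order all_fingroup.
From mathcomp Require Import zify.
Set Implicit Arguments.
Unset Strict Implicit.
Unset Printing Implicit Defensive.

Lemma expg_porbit_mod (T : finType) (s : {perm T}) x a :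
  (s ^+ a)%g x = (s ^+ (a %% #|porbit s x|))%g x.
Proof.
set l := #|porbit s x|.
have hl : (s ^+ l)%g x = x by rewrite permX iter_porbit.
have hq : forall q, (s ^+ (q * l))%g x = x.
  elim=> [|q IH]; first by rewrite mul0n expg0 perm1.
  by rewrite mulSn expgD permM hl IH.
by rewrite {1}(divn_eq a l) expgD permM hq.
Qed.

Lemma expg_porbit_inj (T : finType) (s : {perm T}) x a b :
  a < #|porbit s x| -> b < #|porbit s x| -> (s ^+ a)%g x = (s ^+ b)%g x -> a = b.
Proof.
move=> ha hb; rewrite !permX -(nth_traject s ha) -(nth_traject s hb).
by move/eqP; rewrite nth_uniq ?size_traject ?uniq_traject_porbit // => /eqP.
Qed.

Lemma expg_porbit_eq (T : finType) (s : {perm T}) x a b :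
  (s ^+ a)%g x = (s ^+ b)%g x <-> a %% #|porbit s x| = b %% #|porbit s x|.
Proof.
have l0 : 0 < #|porbit s x| by rewrite lt0n card_porbit_neq0.
split.
  rewrite expg_porbit_mod (expg_porbit_mod _ _ b).
  by apply: expg_porbit_inj; rewrite ltn_pmod.
by move=> h; rewrite expg_porbit_mod h -expg_porbit_mod.
Qed.

Lemma porbit_exp (T : finType) (s : {perm T}) x a :
  porbit s ((s ^+ a)%g x) = porbit s x.
Proof. exact: porbit_perm. Qed.

Lemma test (a b n : nat) : 0 < n -> a < n -> (a + 1) %% n = if a.+1 == n then 0 else a.+1.
Proof. move=> h1 h2. case: eqP => h. subst. rewrite addn1 modnn //. rewrite modn_small; lia. Qed.
Lemma inv_even (T : finType) (f : T -> T) (A : {set T}) :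
  involutive f -> (forall x, x \in A -> f x \in A) ->
  (forall x, x \in A -> f x != x) -> ~~ odd #|A|.
Proof.
move=> finv.
have [k hk] : exists k, #|A| <= k by exists #|A|.
elim: k A hk => [|k IH] A hk hA hf.
  by move: hk; rewrite leqn0 => /eqP ->.
case: (set_0Vmem A) => [->|[x xA]]; first by rewrite cards0.
have fxA : f x \in A :\ x by rewrite !inE hf // hA.
have e : #|A| = (#|A :\ x :\ f x|).+2.
  by rewrite (cardsD1 x A) xA (cardsD1 (f x) (A :\ x)) fxA.
rewrite e /= negbK; apply: IH.
- by move: hk; rewrite e; lia.
- move=> y; rewrite !inE => /and3P[h1 h2 h3]; rewrite hA // andbT.
  apply/andP; split.
    by apply: contra h2 => /eqP /(can_inj finv) ->.
  by apply: contra h1 => /eqP <-; rewrite finv.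
- by move=> y; rewrite !inE => /and3P[_ _ ?]; apply: hf.
Qed.

Lemma porbits_mem (T : finType) (s : {perm T}) C y :
  C \in porbits s -> y \in C -> C = porbit s y.
Proof.
by case/imsetP=> x _ -> yC; apply/eqP; rewrite eq_sym eq_porbit_mem.
Qed.

Lemma comb_nec n (g : {perm 'I_n}) (r : nat -> 'I_n) :
  (g ^+ (2 * n))%g = 1%g ->
  (forall t, t < n -> (g ^+ (2 * t + 1))%g (r (n - 1 - t)) = r t) ->
  {in [pred t | t < n] &, injective r} ->
  (forall C, C \in porbits g -> #|C| %| 2 * n) /\
  #|[set C in porbits g | odd #|C|]| <= 1.
Proof.
move=> g2n hr rinj; split.
  move=> C /imsetP[x _ ->].
  have : (g ^+ (2 * n))%g x = (g ^+ 0)%g x by rewrite g2n expg0.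
  by move/expg_porbit_eq; rewrite mod0n => /eqP.
pose r' (t : 'I_n) := r t.
have r'inj : injective r'.
  by move=> t1 t2 /rinj h; apply: val_inj; apply: h; rewrite inE ltn_ord.
have key : forall C, C \in porbits g -> odd #|C| ->
    exists2 t : 'I_n, rev_ord t = t & r' t \in C.
  move=> C CP oddC.
  pose A := r' @^-1: C.
  have cA : #|A| = #|C| by rewrite card_preimset.
  case: (boolP [exists t in A, rev_ord t == t]).
    by case/exists_inP=> t tA /eqP h; exists t; rewrite // inE in tA.
  rewrite negb_exists_in => /forall_inP hnf.
  have : ~~ odd #|A|.
    apply: (@inv_even _ (@rev_ord n)) => //; first exact: rev_ordK.
    move=> t; rewrite !inE => tC.
    have e : val (rev_ord t) = n - 1 - t by rewrite /=; lia.
    have h : r' t = (g ^+ (2 * t + 1))%g (r' (rev_ord t)) by rewrite /r' e hr.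
    by rewrite (porbits_mem CP tC) h porbit_perm; exact: porbit_id.
  by rewrite cA oddC.
apply/card_le1_eqP => C1 C2; rewrite !inE => /andP[h1 o1] /andP[h2 o2].
have [t1 f1 i1] := key _ h1 o1.
have [t2 f2 i2] := key _ h2 o2.
have et : t1 = t2.
  apply: val_inj; move: f1 f2 => /(congr1 val) /= f1 /(congr1 val) /= f2; lia.
by rewrite (porbits_mem h1 i1) (porbits_mem h2 i2) et.
Qed.
Lemma t1 (m t : nat) : 0 < m -> (2 * m - t %% m + (2 * t + 1)) %% (2 * m) = (1 + t %% m) %% (2 * m).
Proof.
move=> m0; have hr := ltn_pmod t m0.
rewrite {2}(divn_eq t m).
set q := t %/ m; set r := t %% m.
have -> : 2 * m - r + (2 * (q * m + r) + 1) = (q + 1) * (2 * m) + (1 + r) by nia.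
by rewrite modnMDl.
Qed.
Lemma t2 (m a b T0 : nat) : T0 <= a < T0 + m -> T0 <= b < T0 + m -> a %% m = b %% m -> a = b.
Proof.
move=> ha hb e.
wlog ab : a b ha hb e / a <= b.
  move=> H; case: (leqP a b) => h; first exact: H.
  by symmetry; apply: H => //; lia.
have : m %| b - a by rewrite -eqn_mod_dvd // e.
case/dvdnP => c hc.
have : c = 0 by nia.
move=> c0; move: hc; rewrite c0 mul0n; lia.
Qed.
Lemma t3 (m r : nat) : r < m -> (2 * m - r) %% (2 * m) = if r == 0 then 0 else 2 * m - r.
Proof. move=> h; case: eqP => [->|h2]; first by rewrite subn0 modnn. rewrite modn_small; lia. Qed.
Lemma t4 (m r : nat) : r < m -> (1 + r) %% (2 * m) = 1 + r.
Proof. move=> h; rewrite modn_small; lia. Qed.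

Lemma c12 m a b : a < m -> b < m -> 1 + a = (if b == 0 then 0 else 2*m - b) -> False.
Proof. by move=> ha hb; case: eqP; lia. Qed.
Lemma c22 m a b : a < m -> b < m ->
  (if a == 0 then 0 else 2*m - a) = (if b == 0 then 0 else 2*m - b) -> a = b.
Proof. by move=> ha hb; do 2 case: eqP; lia. Qed.

Definition inU (n T0 k : nat) := [pred u : nat | (T0 <= u < T0 + k) || (n - T0 - k <= u < n - T0)].

Lemma iter_closed (T : finType) (g : {perm T}) (S : {set T}) x i :
  (forall x, x \in S -> g x \in S) -> x \in S -> (g ^+ i)%g x \in S.
Proof.
move=> hcl xS; rewrite permX; elim: i => [|i IH] //=; exact: hcl.
Qed.

Lemma even_part n (g : {perm 'I_n}) (d : 'I_n) k : forall S : {set 'I_n},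
  #|S| <= k -> (forall x, x \in S -> g x \in S) ->
  (forall x, x \in S -> ~~ odd #|porbit g x|) ->
  ~~ odd #|S| /\ forall T0, 2 * T0 + #|S| <= n -> exists r : nat -> 'I_n,
   [/\ forall t, T0 <= t < T0 + #|S|./2 -> (g ^+ (2 * t + 1))%g (r (n - 1 - t)) = r t,
       forall u, inU n T0 (#|S|./2) u -> r u \in S &
       {in inU n T0 (#|S|./2) &, injective r}].
Proof.
have empty_case : forall S : {set 'I_n}, S = set0 ->
  ~~ odd #|S| /\ forall T0, 2 * T0 + #|S| <= n -> exists r : nat -> 'I_n,
   [/\ forall t, T0 <= t < T0 + #|S|./2 -> (g ^+ (2 * t + 1))%g (r (n - 1 - t)) = r t,
       forall u, inU n T0 (#|S|./2) u -> r u \in S &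
       {in inU n T0 (#|S|./2) &, injective r}].
  move=> S ->; rewrite cards0; split=> // T0 _; exists (fun _ => d); split.
  - by move=> t; lia.
  - by move=> u; rewrite inE; lia.
  - by move=> u v; rewrite inE; lia.
elim: k => [|k IH] S hk hcl hev.
  apply: empty_case; apply/eqP; rewrite -cards_eq0; lia.
case: (set_0Vmem S) => [S0|[s sS]]; first exact: empty_case.
pose C := porbit g s.
have CS : C \subset S.
  by apply/subsetP=> y /porbitP[i ->]; exact: iter_closed.
have l0 : 0 < #|C| by rewrite lt0n card_porbit_neq0.
set m := #|C|./2.
have el : #|C| = 2 * m.
  by rewrite /m -{1}(odd_double_half #|C|) (negbTE (hev _ sS)) add0n -mul2n.
have m0 : 0 < m by lia.
pose S2 := S :\: C.
have eS : #|S| = #|C| + #|S2|.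
  by rewrite /S2 cardsD (setIidPr CS) subnKC // subset_leq_card.
have hcl2 : forall x, x \in S2 -> g x \in S2.
  move=> x; rewrite !inE => /andP[xC xS]; rewrite hcl // andbT.
  apply: contra xC => gxC.
  have : porbit g (g x) = C by apply/eqP; rewrite eq_porbit_mem.
  have -> : g x = (g ^+ 1)%g x by rewrite expg1.
  by rewrite porbit_perm => <-; exact: porbit_id.
have hev2 : forall x, x \in S2 -> ~~ odd #|porbit g x|.
  by move=> x; rewrite inE => /andP[_ ?]; apply: hev.
have [IHo IHr] := IH S2 ltac:(lia) hcl2 hev2.
split; first by rewrite eS oddD (negbTE (hev _ sS)) (negbTE IHo).
move=> T0 hT0.
have [r2 [hr2c hr2m hr2i]] := IHr (T0 + m) ltac:(lia).
set K := #|S|./2.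
have eK : K = m + #|S2|./2.
  rewrite /K eS el -{2}(odd_double_half #|S2|) (negbTE IHo) add0n -!mul2n; lia.
set k2 := #|S2|./2 in hr2c hr2m hr2i eK.
have ek2 : #|S2| = 2 * k2.
  by rewrite /k2 -{1}(odd_double_half #|S2|) (negbTE IHo) add0n -mul2n.
pose r u := if T0 <= u < T0 + m then (g ^+ (1 + u %% m))%g s
  else if n - T0 - m <= u < n - T0 then (g ^+ (2 * m - (n - 1 - u) %% m))%g s
  else r2 u.
have rC : forall u, (T0 <= u < T0 + m) || (n - T0 - m <= u < n - T0) -> r u \in C.
  move=> u hu; rewrite /r; case: ifP => h1; [|case: ifP => h2]; rewrite ?mem_porbit //.
  lia.
have rA : forall w, T0 <= w < T0 + m -> r w = (g ^+ (1 + w %% m))%g s.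
  by move=> w hw; rewrite /r hw.
have rB : forall w, n - T0 - m <= w < n - T0 ->
    r w = (g ^+ (2 * m - (n - 1 - w) %% m))%g s.
  move=> w hw; rewrite /r hw.
  have -> : (T0 <= w < T0 + m) = false by lia.
  by [].
have rD : forall w, inU n T0 K w ->
    ~~ ((T0 <= w < T0 + m) || (n - T0 - m <= w < n - T0)) -> r w = r2 w /\ r2 w \in S2.
  move=> w hw; rewrite negb_or => /andP[/negbTE h1 /negbTE h2].
  rewrite /r h1 h2; split=> //; apply: hr2m; move: hw; rewrite !inE; lia.
exists r; split.
- move=> t ht.
  case: (ltnP t (T0 + m)) => htm.
    rewrite (rA t); last by lia.
    have e4 : n - 1 - (n - 1 - t) = t by lia.
    rewrite (rB (n - 1 - t)); last by lia.
    rewrite e4 -permM -expgD.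
    by apply/expg_porbit_eq; rewrite -/C el; apply: t1.
  have [-> _] := rD t ltac:(rewrite inE; lia) ltac:(lia).
  have [-> _] := rD (n - 1 - t) ltac:(rewrite inE; lia) ltac:(lia).
  by apply: hr2c; lia.
- move=> u hu.
  case: (boolP ((T0 <= u < T0 + m) || (n - T0 - m <= u < n - T0))) => h.
    by apply: (subsetP CS); exact: rC.
  have [-> ] := rD u hu h.
  by rewrite inE => /andP[].
- move=> u v hu hv e.
  case: (boolP ((T0 <= u < T0 + m) || (n - T0 - m <= u < n - T0))) => cu;
  case: (boolP ((T0 <= v < T0 + m) || (n - T0 - m <= v < n - T0))) => cv.
  + case/orP: cu => cu; case/orP: cv => cv.
    * move: e; rewrite rA // rA // => /expg_porbit_eq; rewrite -/C el.
      rewrite !t4 ?ltn_pmod // => /addnI e.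
      exact: (t2 cu cv).
    * move: e; rewrite rA // rB // => /expg_porbit_eq; rewrite -/C el.
      rewrite t4 ?ltn_pmod // t3 ?ltn_pmod // => e.
      by case: (c12 (ltn_pmod _ m0) (ltn_pmod _ m0) e).
    * move: e; rewrite rB // rA // => /expg_porbit_eq; rewrite -/C el.
      rewrite t4 ?ltn_pmod // t3 ?ltn_pmod // => e.
      by case: (c12 (ltn_pmod _ m0) (ltn_pmod _ m0) (esym e)).
    * move: e; rewrite rB // rB // => /expg_porbit_eq; rewrite -/C el.
      rewrite !t3 ?ltn_pmod // => e.
      have {}e := c22 (ltn_pmod _ m0) (ltn_pmod _ m0) e.
      have : n - 1 - u = n - 1 - v.
        by apply: (t2 (T0 := T0) (m := m)) => //; lia.
      lia.
  + have := rC u cu; have [<- ] := rD v hv cv.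
    by rewrite -e inE => /andP[/negP].
  + have := rC v cv; have [<- ] := rD u hu cu.
    by rewrite e inE => /andP[/negP].
  + have [eu _] := rD u hu cu; have [ev _] := rD v hv cv.
    apply: hr2i; rewrite ?inE; first (move: hu; rewrite inE; lia);
      first (move: hv; rewrite inE; lia).
    by rewrite -eu -ev.
Qed.

Lemma swap_cond n (g : {perm 'I_n}) (r : nat -> 'I_n) t :
  (g ^+ (2 * n))%g = 1%g -> t < n ->
  (g ^+ (2 * t + 1))%g (r (n - 1 - t)) = r t ->
  (g ^+ (2 * (n - 1 - t) + 1))%g (r (n - 1 - (n - 1 - t))) = r (n - 1 - t).
Proof.
move=> g2n tn h.
have -> : n - 1 - (n - 1 - t) = t by lia.
rewrite -h -permM -expgD.
have -> : 2 * t + 1 + (2 * (n - 1 - t) + 1) = 2 * n by lia.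
by rewrite g2n perm1.
Qed.

Lemma comb_suff n (g : {perm 'I_n}) (d : 'I_n) :
  (forall C, C \in porbits g -> #|C| %| 2 * n) ->
  #|[set C in porbits g | odd #|C|]| <= 1 ->
  (g ^+ (2 * n))%g = 1%g /\ exists r : nat -> 'I_n,
    (forall t, t < n -> (g ^+ (2 * t + 1))%g (r (n - 1 - t)) = r t) /\
    {in [pred t | t < n] &, injective r}.
Proof.
move=> hdiv hodd.
have hP : forall x, porbit g x \in porbits g by move=> x; apply: imset_f.
have g2n : (g ^+ (2 * n))%g = 1%g.
  apply/permP => x; rewrite perm1.
  have := (expg_porbit_eq g x (2 * n) 0).2; rewrite expg0 perm1; apply.
  by rewrite mod0n; apply/eqP; exact: hdiv.
split=> //.
pose E := [set x | ~~ odd #|porbit g x|].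
have hclE : forall x, x \in E -> g x \in E.
  move=> x; rewrite !inE.
  have -> : g x = (g ^+ 1)%g x by rewrite expg1.
  by rewrite porbit_perm.
have hevE : forall x, x \in E -> ~~ odd #|porbit g x| by move=> x; rewrite inE.
have [oE hE] := even_part d (leqnn #|E|) hclE hevE.
have cE : #|E| <= n by rewrite -[n in _ <= n]card_ord max_card.
have [rE [hEc hEm hEi]] := hE 0 ltac:(lia).
set a := #|E|./2 in hEc hEm hEi.
have ea : #|E| = 2 * a.
  by rewrite /a -{1}(odd_double_half #|E|) (negbTE oE) add0n -mul2n.
pose s0 := odflt d [pick x in ~: E].
have hcent : a < n - a -> [/\ s0 \in ~: E, porbit g s0 = ~: E & n - 2 * a %| n].
  move=> h.
  have : ~: E != set0.
    have hC : #|E| + #|~: E| = n by rewrite cardsC card_ord.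
    by rewrite -card_gt0; lia.
  case/set0Pn => y yO.
  have s0O : s0 \in ~: E.
    by rewrite /s0; case: pickP => [x /= ->|/(_ y)] //; rewrite yO.
  have eqO : porbit g s0 = ~: E.
    apply/setP => z; apply/idP/idP.
      move=> zs; have : porbit g z = porbit g s0.
        by apply/eqP; rewrite eq_porbit_mem.
      by move: s0O; rewrite !inE => ho ->.
    move=> zO; rewrite -eq_porbit_mem; apply/eqP.
    move: zO s0O; rewrite !inE !negbK => oz os.
    by apply: (card_le1_eqP hodd); rewrite inE hP.
  have hC : #|E| + #|~: E| = n by rewrite cardsC card_ord.
  split=> //.
  have : #|~: E| %| 2 * n by rewrite -eqO; exact: hdiv.
  have oO : odd #|~: E|.
    by move: s0O; rewrite !inE negbK eqO.
  rewrite Gauss_dvdr ?coprimen2 //.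
  by have -> : n - 2 * a = #|~: E| by lia.
have hC : #|E| + #|~: E| = n by rewrite cardsC card_ord.
pose r u := if a <= u < n - a then (g ^+ (u - a))%g s0 else rE u.
have rc : forall u, a <= u < n - a -> r u = (g ^+ (u - a))%g s0.
  by move=> u h; rewrite /r h.
have rn : forall u, ~~ (a <= u < n - a) -> r u = rE u.
  by move=> u h; rewrite /r (negbTE h).
exists r; split.
- move=> t tn.
  case: (ltnP t a) => h1.
    rewrite (rn t); last by lia.
    rewrite (rn (n - 1 - t)); last by lia.
    by apply: hEc; lia.
  case: (ltnP t (n - a)) => h2.
    have [s0O eqO dn] := hcent ltac:(lia).
    rewrite (rc t); last by lia.
    rewrite (rc (n - 1 - t)); last by lia.
    rewrite -permM -expgD; apply/expg_porbit_eq; rewrite eqO.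
    have lO : #|~: E| = n - 2 * a by lia.
    rewrite lO.
    have -> : n - 1 - t - a + (2 * t + 1) = n + (t - a) by lia.
    case/dvdnP: dn => c hc.
    have -> : n + (t - a) = c * (n - 2 * a) + (t - a) by rewrite -hc.
    by rewrite modnMDl.
  have H := hEc (n - 1 - t) ltac:(lia).
  have := @swap_cond n g rE (n - 1 - t) g2n ltac:(lia) H.
  have -> : n - 1 - (n - 1 - t) = t by lia.
  rewrite (rn t); last by lia.
  rewrite (rn (n - 1 - t)); last by lia.
  by [].
- move=> u v; rewrite !inE => un vn e.
  case: (boolP (a <= u < n - a)) => cu; case: (boolP (a <= v < n - a)) => cv.
  + have [s0O eqO dn] := hcent ltac:(lia).
    move: e; rewrite (rc u) // (rc v) // => e.
    have lO : #|porbit g s0| = n - 2 * a by rewrite eqO; lia.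
    have := expg_porbit_inj (s := g) (x := s0) (a := u - a) (b := v - a).
    rewrite lO => /(_ ltac:(lia) ltac:(lia) e); lia.
  + have [s0O eqO dn] := hcent ltac:(lia).
    have : r u \in ~: E by rewrite (rc u) // -eqO mem_porbit.
    rewrite e (rn v) // inE hEm //; rewrite inE; lia.
  + have [s0O eqO dn] := hcent ltac:(lia).
    have : r v \in ~: E by rewrite (rc v) // -eqO mem_porbit.
    rewrite -e (rn u) // inE hEm //; rewrite inE; lia.
  + move: e; rewrite (rn u) // (rn v) // => e.
    by apply: hEi => //; rewrite inE; lia.
Qed.

Lemma beta_n n (b : {perm 'I_n}) x0 :
  (forall x, x \in porbit b x0) -> #|porbit b x0| = n -> (b ^+ n)%g = 1%g.
Proof.
move=> hx hn; apply/permP => x; rewrite perm1.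
have ex : porbit b x = porbit b x0 by apply/eqP; rewrite eq_porbit_mem.
have := (expg_porbit_eq b x n 0).2; rewrite expg0 perm1; apply.
by rewrite ex hn modnn mod0n.
Qed.

Lemma auto_rule n (b g : {perm 'I_n}) L :
  autoparatopism12 1%g b g L -> forall x y, L (b y) x = g (L x y).
Proof.
move=> hA x y.
have : (b y, (1%g : {perm 'I_n}) x, g (L x y)) \in paratopism12_image 1%g b g L.
  by apply/imsetP; exists ((x, y), L x y); rewrite // inE.
by rewrite hA inE /= perm1 => /eqP ->.
Qed.

Lemma nec_L n (b g : {perm 'I_n}) x0 :
  (forall x, x \in porbit b x0) -> #|porbit b x0| = n ->
  in_Par12 1%g b g ->
  (g ^+ (2 * n))%g = 1%g /\ exists r : nat -> 'I_n,
    (forall t, t < n -> (g ^+ (2 * t + 1))%g (r (n - 1 - t)) = r t) /\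
    {in [pred t | t < n] &, injective r}.
Proof.
move=> hx hn [L [[rowi coli] hA]].
have rule := auto_rule hA.
have iter2 : forall a x y, L ((b ^+ a)%g x) ((b ^+ a)%g y) = (g ^+ (2 * a))%g (L x y).
  elim=> [|a IH] x y; first by rewrite !expg0 !perm1.
  have -> : 2 * a.+1 = (2 * a).+2 by lia.
  by rewrite !expgSr !permM rule rule IH.
have bn := beta_n hx hn.
have g2n : (g ^+ (2 * n))%g = 1%g.
  apply/permP => z; rewrite perm1.
  case/codomP: (injF_onto (rowi x0) z) => y ->.
  by rewrite -iter2 bn !perm1.
split=> //.
exists (fun t => L x0 ((b ^+ t)%g x0)); split.
  move=> t tn /=.
  have h1 : g (L x0 ((b ^+ (n - 1 - t))%g x0)) = (g ^+ (2 * (n - t)))%g (L x0 ((b ^+ t)%g x0)).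
    rewrite -rule -iter2; congr L.
      have -> : n - t = (n - 1 - t).+1 by lia.
      by rewrite expgSr permM.
    rewrite -permM -expgD.
    have -> : t + (n - t) = n by lia.
    by rewrite bn perm1.
  rewrite addn1 expgS permM h1 -permM -expgD.
  have -> : 2 * (n - t) + 2 * t = 2 * n by lia.
  by rewrite g2n perm1.
move=> t1 t2; rewrite !inE => h1 h2 /rowi e.
by apply: (@expg_porbit_inj _ b x0); rewrite ?hn.
Qed.
Lemma mod2 n x : x < 2 * n -> x %% n = if x < n then x else x - n.
Proof.
move=> h; case: ifP => h2; first by rewrite modn_small.
have -> : x = (x - n) + n by lia.
rewrite modnDr modn_small; lia.
Qed.
Lemma A1 n j : j < n -> j.+1 %% n = if j.+1 == n then 0 else j.+1.
Proof. move=> h; case: eqP => [->|h2]; [exact: modnn | rewrite modn_small; lia]. Qed.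
Lemma A2 n i j : i < n -> j < n -> (i + n - j.+1 %% n) %% n = n - 1 - (j + n - i) %% n.
Proof.
move=> hi hj; rewrite A1 // mod2; last by lia.
case: eqP => h1; rewrite mod2; try lia; case: ifP; case: ifP; lia.
Qed.
Lemma A3 n i j : i < n -> j < n ->
  (2 * (j.+1 %% n)) %% (2 * n) = (2 * ((j + n - i) %% n) + 1 + (2 * i).+1) %% (2 * n).
Proof.
move=> hi hj.
rewrite muln_modr // modn_mod muln_modr //.
have -> : 2 * (j + n - i) %% (2 * n) + 1 + (2 * i).+1 = 2 * (j + n - i) %% (2 * n) + (2 * i + 2) by lia.
rewrite modnDml.
have -> : 2 * (j + n - i) + (2 * i + 2) = 2 * j.+1 + 2 * n by lia.
by rewrite modnDr.
Qed.
Lemma A4 n i j1 j2 : i < n -> j1 < n -> j2 < n ->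
  (j1 + n - i) %% n = (j2 + n - i) %% n -> j1 = j2.
Proof.
move=> hi h1 h2; rewrite !mod2; try lia; case: ifP; case: ifP; lia.
Qed.

Lemma suff_L n (b g : {perm 'I_n}) x0 (r : nat -> 'I_n) :
  (forall x, x \in porbit b x0) -> #|porbit b x0| = n -> (g ^+ (2 * n))%g = 1%g ->
  (forall t, t < n -> (g ^+ (2 * t + 1))%g (r (n - 1 - t)) = r t) ->
  {in [pred t | t < n] &, injective r} -> in_Par12 1%g b g.
Proof.
move=> hx hn g2n hr ri.
have n0 : 0 < n := leq_ltn_trans (leq0n x0) (ltn_ord x0).
pose f (i : 'I_n) := (b ^+ i)%g x0.
have finj : injective f.
  move=> i j e; apply: val_inj; apply: (@expg_porbit_inj _ b x0) e; rewrite hn; exact: ltn_ord.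
pose idx x := nat_of_ord (invF finj x).
have hidx : forall x, (b ^+ idx x)%g x0 = x := f_invF finj.
have idxn : forall x, idx x < n := fun x => ltn_ord _.
have idxinj : forall x y, idx x = idx y -> x = y.
  by move=> x y e; rewrite -(hidx x) e hidx.
have idxb : forall x, idx (b x) = (idx x).+1 %% n.
  move=> x; apply: (@expg_porbit_inj _ b x0); rewrite ?hn ?idxn ?ltn_pmod //.
  have := expg_porbit_mod b x0 (idx x).+1; rewrite hn => <-.
  by rewrite hidx expgSr permM hidx.
pose L x y := (g ^+ (2 * idx x))%g (r ((idx y + n - idx x) %% n)).
have rule : forall x y, L (b y) x = g (L x y).
  move=> x y; rewrite /L idxb.
  have hi := idxn x; have hj := idxn y.
  rewrite A2 //.
  have ht : (idx y + n - idx x) %% n < n by rewrite ltn_pmod.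
  rewrite -(hr _ ht) -!permM -expgSr -expgD.
  by rewrite -(expg_mod _ g2n) -[in RHS](expg_mod _ g2n) (A3 hi hj).
have rowi : forall x, injective (L x).
  move=> x y1 y2; rewrite /L => /perm_inj /ri.
  rewrite !inE !ltn_pmod // => /(_ isT isT) e.
  by apply: idxinj; apply: (A4 (idxn x) (idxn y1) (idxn y2) e).
exists L; split; first split.
- exact: rowi.
- move=> y x1 x2 e.
  have : L (b (b^-1%g x1)) y = L (b (b^-1%g x2)) y by rewrite !permKV.
  by rewrite !rule => /perm_inj /rowi /perm_inj.
- apply/setP => [[[x y] z]]; rewrite inE /=; apply/imsetP/eqP.
    case=> [[[x' y'] z']]; rewrite inE /= => /eqP -> [-> -> ->].
    by rewrite perm1 rule.
  move=> ->; exists ((y, (b^-1)%g x), L y ((b^-1)%g x)); first by rewrite inE.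
  by rewrite /= perm1 -rule permKV.
Qed.

Theorem theorem4p8 (n : nat) (beta gamma : {perm 'I_n}) :
  is_full_cycle beta ->
  (in_Par12 1%g beta gamma <->
   ((forall C, C \in porbits gamma -> #|C| %| 2 * n) /\
    #|[set C in porbits gamma | odd #|C|]| <= 1)).
Proof.
rewrite /is_full_cycle => hfull.
have [x0 hx hn] : exists2 x0, (forall x, x \in porbit beta x0) & #|porbit beta x0| = n.
  have : porbits beta != set0 by rewrite -card_gt0 hfull.
  case/set0Pn => C /imsetP[x0 _ eC].
  have hx : forall x, x \in porbit beta x0.
    move=> x.
    have hP : forall y, porbit beta y \in porbits beta by move=> y; apply: imset_f.
    have : porbit beta x = porbit beta x0.
      have h1 : #|porbits beta| <= 1 by rewrite hfull.
      exact: (card_le1_eqP h1).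
    by move=> <-; exact: porbit_id.
  exists x0 => //.
  have -> : porbit beta x0 = setT by apply/setP => x; rewrite inE hx.
  by rewrite cardsT card_ord.
split.
  move=> hP; have [g2n [r [hr ri]]] := nec_L hx hn hP.
  exact: comb_nec g2n hr ri.
case=> hdiv hodd; have [g2n [r [hr ri]]] := comb_suff x0 hdiv hodd.
exact: suff_L hx hn g2n hr ri.
Qed.
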